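(* Let $\theta>0$, $L\ge1$, $K(x,y)=\exp(-\theta|x-y|)$ on $[0,1]$, and $\mathbf V=\operatorname{span}\{K(\cdot,j2^{-L}):j=0,1,\dots,2^L\}$. Then the $2^L+1$ functions $\psi_{01},\psi_{02}$ and $\psi_{lm}$ ($l=1,\dots,L$, $m\in\{1,3,\dots,2^l-1\}$) form an orthonormal basis of $\mathbf V$ with respect to the inner product of the reproducing kernel Hilbert space $\mathcal N_K[0,1]$ of $K$.
   Context: $\mathcal N_K[0,1]$ is the RKHS of $K$ on $[0,1]$, i.e. the completion of finite combinations $\sum_j\beta_jK(\cdot,x_j)$ under $\langle \sum_j\beta_jK(\cdot,x_j),\sum_k\beta'_kK(\cdot,x'_k)\rangle=\sum_{j,k}\beta_j\beta'_kK(x_j,x'_k)$. The functions are $\psi_{01}(x)=\dfrac{e^{-\theta x}+e^{-\theta(1-x)}}{\sqrt{2(1+e^{-\theta})}}$, $\psi_{02}(x)=\dfrac{e^{-\theta x}-e^{-\theta(1-x)}}{\sqrt{2(1-e^{-\theta})}}$, and for $l\ge1$, odd $m\in\{1,\dots,2^l-1\}$: $\psi_{lm}(x)=\sqrt{\tfrac{2}{\sinh(2^{1-l}\theta)}}\sinh(\theta(x-(m-1)2^{-l}))$ on $[(m-1)2^{-l},m2^{-l}]$, $\psi_{lm}(x)=\sqrt{\tfrac{2}{\sinh(2^{1-l}\theta)}}\sinh(\theta((m+1)2^{-l}-x))$ on $[m2^{-l},(m+1)2^{-l}]$, and $0$ elsewhere on $[0,1]$. *)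

(* Defs.v *)
From Stdlib Require Import Reals Lra Lia List.
Open Scope R_scope.

Definition Kexp (theta x y : R) : R := exp (- theta * Rabs (x - y)).

Definition node (L j : nat) : R := INR j / 2 ^ L.

(* Elements of V = span{K(.,j2^-L) : j = 0..2^L}, given by coefficients c. *)
Definition comb (theta : R) (L : nat) (c : nat -> R) (x : R) : R :=
  sum_f_R0 (fun j => c j * Kexp theta x (node L j)) (2 ^ L).

(* RKHS inner product of two such finite combinations:
   <sum_j c_j K(.,x_j), sum_k c'_k K(.,x_k)> = sum_{j,k} c_j c'_k K(x_j,x_k). *)
Definition rkhs_ip (theta : R) (L : nat) (c c' : nat -> R) : R :=
  sum_f_R0 (fun j => sum_f_R0 (fun k =>
     c j * c' k * Kexp theta (node L j) (node L k)) (2 ^ L)) (2 ^ L).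

Definition psi01 (theta x : R) : R :=
  (exp (- theta * x) + exp (- theta * (1 - x))) / sqrt (2 * (1 + exp (- theta))).
Definition psi02 (theta x : R) : R :=
  (exp (- theta * x) - exp (- theta * (1 - x))) / sqrt (2 * (1 - exp (- theta))).

Definition psi_lm (theta : R) (l m : nat) (x : R) : R :=
  let a := (INR m - 1) / 2 ^ l in
  let b := INR m / 2 ^ l in
  let c := (INR m + 1) / 2 ^ l in
  let s := sqrt (2 / sinh (2 / 2 ^ l * theta)) in
  if Rle_dec a x then
    if Rle_dec x b then s * sinh (theta * (x - a))
    else if Rle_dec x c then s * sinh (theta * (c - x)) else 0
  else 0.

Definition psi (theta : R) (a : nat * nat) (x : R) : R :=
  match a with
  | (0%nat, 1%nat) => psi01 theta x
  | (0%nat, 2%nat) => psi02 theta x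
  | (0%nat, _) => 0
  | (S l', m) => psi_lm theta (S l') m x
  end.

Definition idx (L : nat) : list (nat * nat) :=
  (0%nat, 1%nat) :: (0%nat, 2%nat) ::
  flat_map (fun l => map (fun k => (l, 2 * k + 1)%nat) (seq 0 (2 ^ (l - 1))))
           (seq 1 L).

Definition delta (a b : nat * nat) : R :=
  if (Nat.eqb (fst a) (fst b) && Nat.eqb (snd a) (snd b))%bool then 1 else 0.

Definition sum_list (l : list (nat * nat)) (f : nat * nat -> R) : R :=
  fold_right (fun a s => f a + s) 0 l.

(* Main.v *)
Require Import Defs.
From Stdlib Require Import Reals Lra Lia List.
Open Scope R_scope.


Definition newlev (l : nat) : list (nat*nat) :=
  map (fun k => (l, 2 * k + 1)%nat) (seq 0 (2 ^ (l - 1))).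
Definition F (L : nat) := flat_map newlev (seq 1 L).

Lemma idx_F L : idx L = (0,1)%nat :: (0,2)%nat :: F L.
Proof. reflexivity. Qed.

Lemma F_S L : F (S L) = F L ++ newlev (S L).
Proof. unfold F. rewrite seq_S, flat_map_app. simpl. rewrite app_nil_r.
  replace (1 + L)%nat with (S L) by lia. reflexivity. Qed.

Lemma in_newlev l a : In a (newlev l) <-> exists k, (k < 2 ^ (l-1))%nat /\ a = (l, 2*k+1)%nat.
Proof. unfold newlev. rewrite in_map_iff. split.
 - intros [k [H1 H2]]. apply in_seq in H2. exists k. split; [lia| auto].
 - intros [k [H1 H2]]. exists k. split; [auto| apply in_seq; lia]. Qed.

Lemma in_F L a : In a (F L) <-> exists l k, (1 <= l <= L)%nat /\ (k < 2 ^ (l-1))%nat /\ a = (l, 2*k+1)%nat.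
Proof. unfold F. rewrite in_flat_map. split.
 - intros [l [H1 H2]]. apply in_seq in H1. apply in_newlev in H2. destruct H2 as [k [? ?]].
   exists l, k. repeat split; auto; lia.
 - intros [l [k [H1 [H2 H3]]]]. exists l. split. apply in_seq; lia. apply in_newlev. eauto. Qed.

Lemma in_idx L a : In a (idx L) <-> a = (0,1)%nat \/ a = (0,2)%nat \/
   exists l k, (1 <= l <= L)%nat /\ (k < 2 ^ (l-1))%nat /\ a = (l, 2*k+1)%nat.
Proof. rewrite idx_F. simpl. rewrite in_F. intuition. Qed.

Lemma NoDup_newlev l : NoDup (newlev l).
Proof. unfold newlev. apply NoDup_map_NoDup_ForallPairs; [|apply seq_NoDup].
  intros a b _ _ H. injection H. lia. Qed.

Lemma NoDup_F L : NoDup (F L).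
Proof. induction L. constructor. rewrite F_S. apply NoDup_app; auto. apply NoDup_newlev.
  intros a Ha Hb. apply in_F in Ha. apply in_newlev in Hb.
  destruct Ha as [l [k [? [? ->]]]]. destruct Hb as [k' [? Hb]]. injection Hb. lia. Qed.

Lemma NoDup_idx L : NoDup (idx L).
Proof. rewrite idx_F. constructor. intros [H|H]. discriminate. apply in_F in H.
  destruct H as [l [k [? [? H]]]]. injection H; lia.
  constructor. intros H. apply in_F in H. destruct H as [l [k [? [? H]]]]. injection H; lia.
  apply NoDup_F. Qed.

Lemma pow2_pos n : (1 <= 2 ^ n)%nat.
Proof. induction n; simpl; lia. Qed.

Lemma length_F L : length (F L) = (2 ^ L - 1)%nat.
Proof. induction L. reflexivity. rewrite F_S, length_app, IHL. unfold newlev.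
  rewrite length_map, length_seq. simpl (S L - 1)%nat. rewrite Nat.sub_0_r.
  pose proof (pow2_pos L). simpl. lia. Qed.

Lemma length_idx L : length (idx L) = (2 ^ L + 1)%nat.
Proof. rewrite idx_F. simpl. rewrite length_F. pose proof (pow2_pos L). lia. Qed.

Lemma sum_list_cons a l f : sum_list (a :: l) f = f a + sum_list l f.
Proof. reflexivity. Qed.

Lemma sum_list_app l1 l2 f : sum_list (l1 ++ l2) f = sum_list l1 f + sum_list l2 f.
Proof. induction l1; cbn [app]. change (sum_list nil f) with 0; ring. rewrite ?sum_list_cons. rewrite IHl1. ring. Qed.

Lemma sum_list_ext l f g : (forall a, In a l -> f a = g a) -> sum_list l f = sum_list l g.
Proof. induction l; simpl; intros H. reflexivity. rewrite ?sum_list_cons.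
  rewrite H by auto. rewrite IHl; auto. Qed.

Lemma sum_list_lin l (al be : R) d d' (p : nat*nat -> R) :
  sum_list l (fun a => (al * d a + be * d' a) * p a) =
  al * sum_list l (fun a => d a * p a) + be * sum_list l (fun a => d' a * p a).
Proof. induction l; simpl. ring. rewrite ?sum_list_cons. rewrite IHl. ring. Qed.

Lemma delta_refl a : delta a a = 1.
Proof. unfold delta. rewrite !Nat.eqb_refl. reflexivity. Qed.

Lemma delta_neq a b : a <> b -> delta a b = 0.
Proof. unfold delta. destruct a as [a1 a2], b as [b1 b2]; simpl. intros H.
  destruct (Nat.eqb_spec a1 b1); destruct (Nat.eqb_spec a2 b2); simpl; auto.
  subst; congruence. Qed.

Lemma delta_sym a b : delta a b = delta b a.
Proof. unfold delta. rewrite (Nat.eqb_sym (fst a)), (Nat.eqb_sym (snd a)). reflexivity. Qed.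

Lemma sum_list_zero l p b : ~ In b l -> sum_list l (fun a => delta a b * p a) = 0.
Proof. induction l; simpl; intros H. reflexivity. rewrite ?sum_list_cons.
  rewrite delta_neq by (intro; apply H; auto). rewrite IHl by auto. ring. Qed.

Lemma sum_list_delta l p b : NoDup l -> In b l -> sum_list l (fun a => delta a b * p a) = p b.
Proof. induction l; simpl; intros Hn H. contradiction. inversion Hn; subst.
  rewrite ?sum_list_cons. destruct H as [->|H].
  - rewrite delta_refl. rewrite sum_list_zero by auto. ring.
  - rewrite delta_neq by (intro; subst; contradiction). rewrite IHl by auto. ring. Qed.

Definition pm (k : nat) (v : R) (j : nat) : R := if Nat.eqb j k then v else 0.

Lemma sum_pm0 k v g n : (n < k)%nat -> sum_f_R0 (fun j => pm k v j * g j) n = 0.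
Proof. induction n; intros H; cbn [sum_f_R0].
  - unfold pm. destruct (Nat.eqb_spec 0 k). lia. ring.
  - rewrite IHn by lia. unfold pm. destruct (Nat.eqb_spec (S n) k). lia. ring. Qed.

Lemma sum_pm k v g n : (k <= n)%nat -> sum_f_R0 (fun j => pm k v j * g j) n = v * g k.
Proof. induction n; intros H; cbn [sum_f_R0].
  - replace k with 0%nat by lia. unfold pm; simpl. reflexivity.
  - destruct (Nat.eq_dec k (S n)).
    + subst. rewrite sum_pm0 by lia. unfold pm. rewrite Nat.eqb_refl. ring.
    + rewrite IHn by lia. unfold pm. destruct (Nat.eqb_spec (S n) k). lia. ring. Qed.

Definition pm3 k1 v1 k2 v2 k3 v3 (j : nat) : R := pm k1 v1 j + pm k2 v2 j + pm k3 v3 j.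

Lemma sum_pm3 k1 v1 k2 v2 k3 v3 g n : (k1 <= n)%nat -> (k2 <= n)%nat -> (k3 <= n)%nat ->
  sum_f_R0 (fun j => pm3 k1 v1 k2 v2 k3 v3 j * g j) n = v1 * g k1 + v2 * g k2 + v3 * g k3.
Proof. intros. unfold pm3.
  rewrite (sum_eq _ (fun j => (pm k1 v1 j * g j + pm k2 v2 j * g j) + pm k3 v3 j * g j))
    by (intros; ring).
  rewrite !sum_plus, !sum_pm by auto. ring. Qed.

Lemma comb_pm3 th L k1 v1 k2 v2 k3 v3 x : (k1 <= 2^L)%nat -> (k2 <= 2^L)%nat -> (k3 <= 2^L)%nat ->
  comb th L (pm3 k1 v1 k2 v2 k3 v3) x =
  v1 * Kexp th x (node L k1) + v2 * Kexp th x (node L k2) + v3 * Kexp th x (node L k3).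
Proof. intros. unfold comb. apply sum_pm3; auto. Qed.

Lemma rkhs_as_comb th L c c' :
  rkhs_ip th L c c' = sum_f_R0 (fun j => c j * comb th L c' (node L j)) (2^L).
Proof. unfold rkhs_ip, comb. apply sum_eq; intros j _.
  rewrite scal_sum. apply sum_eq; intros. ring. Qed.

Lemma rkhs_pm3 th L k1 v1 k2 v2 k3 v3 c' : (k1 <= 2^L)%nat -> (k2 <= 2^L)%nat -> (k3 <= 2^L)%nat ->
  rkhs_ip th L (pm3 k1 v1 k2 v2 k3 v3) c' =
  v1 * comb th L c' (node L k1) + v2 * comb th L c' (node L k2) + v3 * comb th L c' (node L k3).
Proof. intros. rewrite rkhs_as_comb. apply sum_pm3; auto. Qed.

Lemma sum_exch (f : nat -> nat -> R) n m :
  sum_f_R0 (fun j => sum_f_R0 (fun k => f j k) n) m = sum_f_R0 (fun k => sum_f_R0 (fun j => f j k) m) n.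
Proof. induction m; simpl. reflexivity. rewrite IHm. rewrite <- sum_plus. reflexivity. Qed.

Lemma rkhs_sym th L c c' : rkhs_ip th L c c' = rkhs_ip th L c' c.
Proof. unfold rkhs_ip. rewrite sum_exch. apply sum_eq; intros. apply sum_eq; intros.
  unfold Kexp. rewrite Rabs_minus_sym. ring. Qed.

Lemma Kle th x y : x <= y -> Kexp th x y = exp (th*x) / exp (th*y).
Proof. intros H. unfold Kexp. rewrite Rabs_left1 by lra.
  replace (- th * - (x - y)) with (th*x + - (th*y)) by ring. rewrite exp_plus, exp_Ropp. reflexivity. Qed.

Lemma Kge th x y : y <= x -> Kexp th x y = exp (th*y) / exp (th*x).
Proof. intros H. unfold Kexp. rewrite Rabs_right by lra.
  replace (- th * (x - y)) with (th*y + - (th*x)) by ring. rewrite exp_plus, exp_Ropp. reflexivity. Qed.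

Lemma sinh_diff th u v : sinh (th*(u-v)) = (exp(th*u)/exp(th*v) - exp(th*v)/exp(th*u))/2.
Proof. unfold sinh. replace (th*(u-v)) with (th*u + - (th*v)) by ring.
  replace (- (th*u + - (th*v))) with (th*v + - (th*u)) by ring.
  rewrite !exp_plus, !exp_Ropp. reflexivity. Qed.

Lemma cosh_inv y : cosh y = (exp y + / exp y)/2.
Proof. unfold cosh. rewrite exp_Ropp. reflexivity. Qed.

Lemma exp_ah th a h : exp (th*(a+h)) = exp (th*a) * exp (th*h).
Proof. rewrite <- exp_plus. f_equal. ring. Qed.
Lemma exp_ahh th a h : exp (th*(a+h+h)) = exp (th*a) * exp (th*h) * exp(th*h).
Proof. rewrite <- !exp_plus. f_equal. ring. Qed.

Lemma hat th s a h x : 0 < h ->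
 (if Rle_dec a x then if Rle_dec x (a+h) then s * sinh(th*(x-a))
   else if Rle_dec x (a+h+h) then s*sinh(th*((a+h+h)-x)) else 0 else 0)
 = -s/2 * Kexp th x a + s*cosh(th*h) * Kexp th x (a+h) + -s/2 * Kexp th x (a+h+h).
Proof. intros Hh. rewrite cosh_inv.
  assert (eX := exp_pos (th*x)). assert (eA := exp_pos (th*a)). assert (eP := exp_pos (th*h)).
  destruct (Rle_dec a x) as [H1|H1]; [destruct (Rle_dec x (a+h)) as [H2|H2]|].
  - rewrite sinh_diff, (Kge th x a), (Kle th x (a+h)), (Kle th x (a+h+h)) by lra.
    rewrite exp_ah, exp_ahh. field. lra.
  - destruct (Rle_dec x (a+h+h)) as [H3|H3].
    + rewrite sinh_diff, (Kge th x a), (Kge th x (a+h)), (Kle th x (a+h+h)) by lra.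
      rewrite exp_ahh, exp_ah. field. lra.
    + rewrite (Kge th x a), (Kge th x (a+h)), (Kge th x (a+h+h)) by lra.
      rewrite exp_ahh, exp_ah. field. lra.
  - rewrite (Kle th x a), (Kle th x (a+h)), (Kle th x (a+h+h)) by lra.
    rewrite exp_ahh, exp_ah. field. lra.
Qed.

Definition N1 th := sqrt (2 * (1 + exp (- th))).
Definition N2 th := sqrt (2 * (1 - exp (- th))).
Definition sl th (l : nat) := sqrt (2 / sinh (2 / 2 ^ l * th)).

Definition Cf th (L : nat) (a : nat * nat) : nat -> R :=
  match a with
  | (0%nat, 1%nat) => pm3 0 (1 / N1 th) (2^L) (1 / N1 th) 0 0
  | (0%nat, 2%nat) => pm3 0 (1 / N2 th) (2^L) (-1 / N2 th) 0 0
  | (0%nat, _) => fun _ => 0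
  | (S l', m) => pm3 ((m-1)*2^(L - S l'))%nat (- sl th (S l') / 2)
                     (m*2^(L - S l'))%nat (sl th (S l') * cosh (th * (1 / 2 ^ (S l'))))
                     ((m+1)*2^(L - S l'))%nat (- sl th (S l') / 2)
  end.

Lemma Cf_lev th L l m : (1 <= l)%nat -> Cf th L (l, m) =
  pm3 ((m-1)*2^(L - l))%nat (- sl th l / 2)
      (m*2^(L - l))%nat (sl th l * cosh (th * (1 / 2 ^ l)))
      ((m+1)*2^(L - l))%nat (- sl th l / 2).
Proof. intros H. destruct l. lia. reflexivity. Qed.

Lemma psi_lev th l m x : (1 <= l)%nat -> psi th (l, m) x = psi_lm th l m x.
Proof. intros H. destruct l. lia. reflexivity. Qed.

Lemma pow2R_pos n : 0 < 2 ^ n.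
Proof. apply pow_lt. lra. Qed.

Lemma INR2 : INR 2 = 2.
Proof. simpl. ring. Qed.

Lemma node_conv L l k : (l <= L)%nat -> node L (k * 2^(L-l)) = INR k / 2 ^ l.
Proof. intros H. unfold node. rewrite mult_INR, pow_INR, INR2.
  replace (2 ^ L) with (2 ^ (L - l) * 2 ^ l) by (rewrite <- pow_add; f_equal; lia).
  pose proof (pow2R_pos (L-l)). pose proof (pow2R_pos l). field; lra. Qed.

Lemma node0 L : node L 0 = 0.
Proof. unfold node. simpl. pose proof (pow2R_pos L). field; lra. Qed.

Lemma nodeN L : node L (2^L) = 1.
Proof. unfold node. rewrite pow_INR, INR2. pose proof (pow2R_pos L). field; lra. Qed.

Lemma node_in L k : (k <= 2^L)%nat -> 0 <= node L k <= 1.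
Proof. intros H. unfold node. pose proof (pow2R_pos L).
  apply le_INR in H. rewrite pow_INR, INR2 in H. pose proof (pos_INR k).
  split. apply Rmult_le_pos; [lra| left; apply Rinv_0_lt_compat; lra].
  apply Rmult_le_reg_r with (2^L); [lra|]. unfold Rdiv. rewrite Rmult_assoc, Rinv_l; lra. Qed.

Lemma pow2_split L l : (1 <= l <= L)%nat -> (2^L = 2 * 2^(l-1) * 2^(L-l))%nat.
Proof. intros H. rewrite <- Nat.pow_succ_r', <- Nat.pow_add_r. f_equal. lia. Qed.

Definition HAT th s a h x :=
 (if Rle_dec a x then if Rle_dec x (a+h) then s * sinh(th*(x-a))
   else if Rle_dec x (a+h+h) then s*sinh(th*((a+h+h)-x)) else 0 else 0).

Lemma psi_lm_hat th l m x :
  psi_lm th l m x = HAT th (sl th l) ((INR m - 1)/2^l) (1/2^l) x.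
Proof. unfold psi_lm, HAT, sl. cbv zeta. pose proof (pow2R_pos l).
  replace (INR m / 2^l) with ((INR m - 1)/2^l + 1/2^l) by (field; lra).
  replace ((INR m + 1) / 2^l) with ((INR m - 1)/2^l + 1/2^l + 1/2^l) by (field; lra).
  reflexivity. Qed.

Lemma psi_lm_rep th l m x :
  psi_lm th l m x = - sl th l / 2 * Kexp th x ((INR m - 1)/2^l)
     + sl th l * cosh (th * (1/2^l)) * Kexp th x (INR m / 2^l)
     + - sl th l / 2 * Kexp th x ((INR m + 1)/2^l).
Proof. rewrite psi_lm_hat. unfold HAT. pose proof (pow2R_pos l).
  rewrite hat by (unfold Rdiv; rewrite Rmult_1_l; apply Rinv_0_lt_compat; lra).
  replace ((INR m - 1) / 2 ^ l + 1 / 2 ^ l) with (INR m / 2^l) by (field; lra).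
  replace (INR m / 2 ^ l + 1 / 2 ^ l) with ((INR m + 1) / 2^l) by (field; lra).
  reflexivity. Qed.

Lemma sinh0 : sinh 0 = 0.
Proof. unfold sinh. rewrite Ropp_0, exp_0. field. Qed.

Lemma HAT_zero th s a h x : 0 < h -> (x <= a \/ a + h + h <= x) -> HAT th s a h x = 0.
Proof. intros Hh Hx. unfold HAT.
  destruct (Rle_dec a x); [destruct (Rle_dec x (a+h)); [|destruct (Rle_dec x (a+h+h))]|]; auto.
  - replace (x - a) with 0 by lra. rewrite Rmult_0_r, sinh0. ring.
  - replace (a+h+h - x) with 0 by lra. rewrite Rmult_0_r, sinh0. ring.
Qed.

Lemma HAT_mid th s a h : 0 < h -> HAT th s a h (a+h) = s * sinh (th * h).
Proof. intros Hh. unfold HAT.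
  destruct (Rle_dec a (a+h)); [|lra]. destruct (Rle_dec (a+h) (a+h)); [|lra].
  replace (a+h-a) with h by ring. reflexivity. Qed.

Lemma div_le u v p : 0 < p -> u <= v -> u / p <= v / p.
Proof. intros. unfold Rdiv. apply Rmult_le_compat_r; auto. left; apply Rinv_0_lt_compat; auto. Qed.

Lemma psi_lm_zero th l m k : k <> m -> psi_lm th l m (INR k / 2^l) = 0.
Proof. intros H. rewrite psi_lm_hat. pose proof (pow2R_pos l).
  apply HAT_zero. unfold Rdiv; rewrite Rmult_1_l; apply Rinv_0_lt_compat; lra.
  destruct (Nat.lt_ge_cases k m).
  - left. apply div_le; auto. assert (INR (k+1) <= INR m) by (apply le_INR; lia).
    rewrite plus_INR in H2. simpl in H2. lra.
  - right. replace ((INR m - 1) / 2 ^ l + 1 / 2 ^ l + 1 / 2 ^ l) with ((INR m + 1)/2^l) by (field; lra).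
    apply div_le; auto. assert (INR (m+1) <= INR k) by (apply le_INR; lia).
    rewrite plus_INR in H2. simpl in H2. lra.
Qed.

Lemma psi_lm_mid th l m : psi_lm th l m (INR m / 2^l) = sl th l * sinh (th * (1/2^l)).
Proof. rewrite psi_lm_hat. pose proof (pow2R_pos l).
  replace (INR m / 2^l) with ((INR m - 1)/2^l + 1/2^l) by (field; lra).
  apply HAT_mid. unfold Rdiv; rewrite Rmult_1_l; apply Rinv_0_lt_compat; lra. Qed.

Lemma expm_lt1 th : 0 < th -> exp (- th) < 1.
Proof. intros. rewrite <- exp_0. apply exp_increasing. lra. Qed.

Lemma N1_pos th : 0 < N1 th.
Proof. unfold N1. apply sqrt_lt_R0. pose proof (exp_pos (-th)). lra. Qed.
Lemma N2_pos th : 0 < th -> 0 < N2 th.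
Proof. intros. unfold N2. apply sqrt_lt_R0. pose proof (expm_lt1 th H). lra. Qed.
Lemma N1_sq th : N1 th * N1 th = 2 * (1 + exp (-th)).
Proof. unfold N1. apply sqrt_sqrt. pose proof (exp_pos (-th)). lra. Qed.
Lemma N2_sq th : 0 < th -> N2 th * N2 th = 2 * (1 - exp (-th)).
Proof. intros. unfold N2. apply sqrt_sqrt. pose proof (expm_lt1 th H). lra. Qed.

Lemma sinh_pos y : 0 < y -> 0 < sinh y.
Proof. intros. unfold sinh. assert (exp (-y) < exp y) by (apply exp_increasing; lra). lra. Qed.
Lemma cosh_pos y : 0 < cosh y.
Proof. unfold cosh. pose proof (exp_pos y). pose proof (exp_pos (-y)). lra. Qed.
Lemma sinh2 y : sinh (2*y) = 2 * sinh y * cosh y.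
Proof. unfold sinh, cosh. replace (2*y) with (y+y) by ring. replace (-(y+y)) with (-y + -y) by ring.
  rewrite !exp_plus, !exp_Ropp. pose proof (exp_pos y). field. lra. Qed.

Lemma hpos l : 0 < 1 / 2 ^ l.
Proof. pose proof (pow2R_pos l). unfold Rdiv; rewrite Rmult_1_l; apply Rinv_0_lt_compat; lra. Qed.

Lemma sl_pos th l : 0 < th -> 0 < sl th l.
Proof. intros. unfold sl. apply sqrt_lt_R0. pose proof (pow2R_pos l).
  assert (0 < sinh (2 / 2^l * th)). apply sinh_pos. apply Rmult_lt_0_compat; [|lra].
  unfold Rdiv; apply Rmult_lt_0_compat; [lra| apply Rinv_0_lt_compat; lra].
  unfold Rdiv; apply Rmult_lt_0_compat; [lra| apply Rinv_0_lt_compat; lra]. Qed.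

Lemma sl_sq th l : 0 < th ->
  sl th l * sl th l * (sinh (th * (1/2^l)) * cosh (th * (1/2^l))) = 1.
Proof. intros. pose proof (pow2R_pos l).
  assert (Hs : 0 < sinh (th * (1/2^l))) by (apply sinh_pos; apply Rmult_lt_0_compat; [lra|apply hpos]).
  pose proof (cosh_pos (th * (1/2^l))).
  unfold sl. rewrite sqrt_sqrt.
  replace (2 / 2^l * th) with (2 * (th * (1/2^l))) by (field; lra). rewrite sinh2. field. lra.
  replace (2 / 2^l * th) with (2 * (th * (1/2^l))) by (field; lra). rewrite sinh2.
  left. unfold Rdiv. apply Rmult_lt_0_compat. lra. apply Rinv_0_lt_compat.
  apply Rmult_lt_0_compat; lra. Qed.

Lemma idx_bounds L l k : (1 <= l <= L)%nat -> (k < 2^(l-1))%nat ->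
  (((2*k+1)-1)*2^(L-l) <= 2^L)%nat /\ ((2*k+1)*2^(L-l) <= 2^L)%nat /\ ((2*k+1+1)*2^(L-l) <= 2^L)%nat.
Proof. intros H1 H2. rewrite (pow2_split L l H1).
  set (P := (2^(l-1))%nat) in *. set (Q := (2^(L-l))%nat). nia. Qed.

Lemma rep th L a : 0 < th -> In a (idx L) -> forall x, 0 <= x <= 1 -> psi th a x = comb th L (Cf th L a) x.
Proof. intros Hth Ha x Hx. pose proof (pow2_pos L). apply in_idx in Ha.
  destruct Ha as [->|[->|[l [k [H1 [H2 ->]]]]]].
  - simpl Cf. rewrite comb_pm3 by lia. rewrite node0, nodeN. simpl psi. unfold psi01, Kexp.
    rewrite Rabs_right by lra. rewrite (Rabs_left1 (x-1)) by lra.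
    replace (- th * - (x - 1)) with (- th * (1 - x)) by ring. rewrite Rminus_0_r.
    pose proof (N1_pos th). unfold N1 in *. field. lra.
  - simpl Cf. rewrite comb_pm3 by lia. rewrite node0, nodeN. simpl psi. unfold psi02, Kexp.
    rewrite Rabs_right by lra. rewrite (Rabs_left1 (x-1)) by lra.
    replace (- th * - (x - 1)) with (- th * (1 - x)) by ring. rewrite Rminus_0_r.
    pose proof (N2_pos th Hth). unfold N2 in *. field. lra.
  - destruct (idx_bounds L l k H1 H2) as [B1 [B2 B3]].
    rewrite Cf_lev by lia. rewrite psi_lev by lia. rewrite comb_pm3 by auto.
    rewrite !node_conv by lia. rewrite psi_lm_rep.
    rewrite minus_INR by lia. rewrite !plus_INR. simpl (INR 1). reflexivity.
Qed.

Lemma comb_node th L b k : 0 < th -> In b (idx L) -> (k <= 2^L)%nat ->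
  comb th L (Cf th L b) (node L k) = psi th b (node L k).
Proof. intros. symmetry. apply rep; auto. apply node_in; auto. Qed.

Lemma psi0_lev th l k : (1 <= l)%nat -> psi th (l, 2*k+1)%nat 0 = 0.
Proof. intros. rewrite psi_lev by auto.
  assert (E : 0 = INR 0 / 2^l) by (simpl; pose proof (pow2R_pos l); field; lra).
  rewrite E at 1. apply psi_lm_zero. lia. Qed.

Lemma psi1_lev th l k : (1 <= l)%nat -> psi th (l, 2*k+1)%nat 1 = 0.
Proof. intros. rewrite psi_lev by auto. replace 1 with (INR (2^l) / 2^l).
  apply psi_lm_zero. replace l with (S (l-1)) by lia. simpl. lia.
  rewrite pow_INR, INR2. pose proof (pow2R_pos l). field. lra. Qed.

Lemma psi01_0 th : psi01 th 0 = (1 + exp (-th)) / N1 th.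
Proof. unfold psi01, N1. rewrite Rmult_0_r, exp_0, Rminus_0_r, Rmult_1_r. reflexivity. Qed.
Lemma psi01_1 th : psi01 th 1 = (1 + exp (-th)) / N1 th.
Proof. unfold psi01, N1. rewrite Rminus_diag, !Rmult_0_r, exp_0, Rmult_1_r. f_equal. ring. Qed.
Lemma psi02_0 th : psi02 th 0 = (1 - exp (-th)) / N2 th.
Proof. unfold psi02, N2. rewrite Rmult_0_r, exp_0, Rminus_0_r, Rmult_1_r. reflexivity. Qed.
Lemma psi02_1 th : psi02 th 1 = - (1 - exp (-th)) / N2 th.
Proof. unfold psi02, N2. rewrite Rminus_diag, !Rmult_0_r, exp_0, Rmult_1_r. f_equal. ring. Qed.

Lemma not_even_odd j X k : (j * (2 * X) <> 2 * k + 1)%nat.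
Proof. intro H. assert (j * (2*X) = 2 * (j*X))%nat by ring. lia. Qed.

Lemma pow2_S n : (1 <= n)%nat -> (2^n = 2 * 2^(n-1))%nat.
Proof. intros. replace n with (S (n-1)) at 1 by lia. reflexivity. Qed.

Lemma conv2 j l l' : (l <= l')%nat -> INR j / 2^l = INR (j * 2^(l'-l)) / 2^l'.
Proof. intros. rewrite <- (node_conv l' l j) by auto. reflexivity. Qed.

Lemma ortho_coarse th L a b : 0 < th -> In a (idx L) -> In b (idx L) -> (fst a <= fst b)%nat ->
  rkhs_ip th L (Cf th L a) (Cf th L b) = delta a b.
Proof. intros Hth Ha Hb Hle. pose proof (pow2_pos L).
  pose proof (N1_pos th) as P1. pose proof (N2_pos th Hth) as P2. pose proof (N1_sq th) as Q1. pose proof (N2_sq th Hth) as Q2.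
  pose proof (Ha) as Ha'. apply in_idx in Ha'. pose proof (Hb) as Hb'. apply in_idx in Hb'.
  destruct Ha' as [->|[->|[l [k [H1 [H2 ->]]]]]].
  - simpl Cf at 1. rewrite rkhs_pm3 by lia. rewrite !comb_node by (auto; lia).
    rewrite node0, nodeN.
    destruct Hb' as [->|[->|[l' [k' [H1' [H2' ->]]]]]].
    + simpl psi. rewrite psi01_0, psi01_1, delta_refl. transitivity (2 * (1 + exp(-th)) / (N1 th * N1 th)). field. lra. rewrite Q1. field. pose proof (exp_pos (-th)). lra.
    + simpl psi. rewrite psi02_0, psi02_1, delta_neq by discriminate. field. lra.
    + rewrite psi0_lev, psi1_lev, delta_neq by (first [lia | intro E; injection E; lia]). ring.
  - simpl Cf at 1. rewrite rkhs_pm3 by lia. rewrite !comb_node by (auto; lia).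
    rewrite node0, nodeN.
    destruct Hb' as [->|[->|[l' [k' [H1' [H2' ->]]]]]].
    + simpl psi. rewrite psi01_0, psi01_1, delta_neq by discriminate. field. lra.
    + simpl psi. rewrite psi02_0, psi02_1, delta_refl. transitivity (2 * (1 - exp(-th)) / (N2 th * N2 th)). field. lra. rewrite Q2. field.
      pose proof (expm_lt1 th Hth). lra.
    + rewrite psi0_lev, psi1_lev, delta_neq by (first [lia | intro E; injection E; lia]). ring.
  - destruct (idx_bounds L l k H1 H2) as [B1 [B2 B3]].
    rewrite Cf_lev at 1 by lia. rewrite rkhs_pm3 by auto. rewrite !comb_node by auto.
    rewrite !node_conv by lia.
    destruct Hb' as [->|[->|[l' [k' [H1' [H2' ->]]]]]]; simpl in Hle; try lia.
    rewrite !psi_lev by lia.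
    destruct (Nat.eq_dec l l') as [<-|Hne].
    + destruct (Nat.eq_dec k k') as [<-|Hk].
      * rewrite delta_refl. rewrite (psi_lm_zero th l (2*k+1) (2*k+1-1)), (psi_lm_zero th l (2*k+1) (2*k+1+1)) by lia. rewrite psi_lm_mid.
        pose proof (sl_sq th l Hth). nra.
      * rewrite delta_neq by (intro E; injection E; lia).
        rewrite !psi_lm_zero by lia. ring.
    + rewrite delta_neq by (intro E; injection E; lia).
      rewrite !(conv2 _ l l') by lia.
      rewrite (pow2_S (l'-l)) by lia.
      rewrite !psi_lm_zero by apply not_even_odd. ring.
Qed.

Definition inspan th L (f : R -> R) := exists d : nat * nat -> R,
  forall x, 0 <= x <= 1 -> f x = sum_list (idx L) (fun a => d a * psi th a x).

Lemma inspan_lin th L f g al be : inspan th L f -> inspan th L g ->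
  inspan th L (fun x => al * f x + be * g x).
Proof. intros [d Hd] [d' Hd']. exists (fun a => al * d a + be * d' a). intros x Hx.
  rewrite sum_list_lin, <- Hd, <- Hd'; auto. Qed.

Lemma inspan_ext th L f g : (forall x, 0 <= x <= 1 -> f x = g x) -> inspan th L g -> inspan th L f.
Proof. intros H [d Hd]. exists d. intros. rewrite H, Hd; auto. Qed.

Lemma inspan_psi th L b : In b (idx L) -> inspan th L (psi th b).
Proof. intros H. exists (fun a => delta a b). intros. rewrite sum_list_delta; auto. apply NoDup_idx. Qed.

Lemma idx_S L : idx (S L) = idx L ++ newlev (S L).
Proof. rewrite !idx_F, F_S. reflexivity. Qed.

Lemma sum_list_0 l (f : nat*nat -> R) : (forall a, In a l -> f a = 0) -> sum_list l f = 0.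
Proof. intros H. induction l. reflexivity. rewrite sum_list_cons, H, IHl; auto. ring.
  intros; apply H; simpl; auto. simpl; auto. Qed.

Lemma inspan_up th L f : inspan th L f -> inspan th (S L) f.
Proof. intros [d Hd]. exists (fun a => if Nat.leb (fst a) L then d a else 0).
  intros x Hx. rewrite idx_S, sum_list_app, Hd by auto.
  rewrite (sum_list_0 (newlev (S L))). rewrite Rplus_0_r. apply sum_list_ext.
  intros a Ha. apply in_idx in Ha. destruct Ha as [->|[->|[l [k [H1 [H2 ->]]]]]]; simpl; auto.
  replace (Nat.leb l L) with true; auto. symmetry. apply Nat.leb_le. lia.
  intros a Ha. apply in_newlev in Ha. destruct Ha as [k [_ ->]]. cbn [fst].
  replace (Nat.leb (S L) L) with false by (symmetry; apply Nat.leb_gt; lia). ring.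
Qed.

Lemma span_all th L : 0 < th -> forall j, (j <= 2^L)%nat -> inspan th L (fun x => Kexp th x (node L j)).
Proof. intros Hth. pose proof (N1_pos th) as P1. pose proof (N2_pos th Hth) as P2.
  induction L; intros j Hj.
  - simpl in Hj. assert (Hj' : j = 0%nat \/ j = 1%nat) by lia. destruct Hj' as [->| ->].
    + exists (fun a => N1 th / 2 * delta a (0,1)%nat + N2 th / 2 * delta a (0,2)%nat).
      intros x Hx. change (idx 0) with ((0,1)%nat :: (0,2)%nat :: nil).
      rewrite !sum_list_cons. change (sum_list nil _) with 0. unfold delta; simpl.
      unfold psi01, psi02, Kexp, node. simpl. rewrite Rabs_right by lra.
      replace (x - 0/1) with x by field. unfold N1, N2 in *. field. lra.
    + exists (fun a => N1 th / 2 * delta a (0,1)%nat - N2 th / 2 * delta a (0,2)%nat).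
      intros x Hx. change (idx 0) with ((0,1)%nat :: (0,2)%nat :: nil).
      rewrite !sum_list_cons. change (sum_list nil _) with 0. unfold delta; simpl.
      unfold psi01, psi02, Kexp, node. simpl. rewrite Rabs_left1 by lra.
      replace (- th * - (x - 1 / 1)) with (- th * (1 - x)) by (field).
      unfold N1, N2 in *. field. lra.
  - destruct (Nat.Even_or_Odd j) as [[i Hi]|[i Hi]].
    + assert (Hi' : (i <= 2^L)%nat) by (simpl in Hj; lia).
      apply inspan_up. apply inspan_ext with (fun x => Kexp th x (node L i)); [|apply IHL; auto].
      intros x _. f_equal. unfold node at 2. rewrite <- (node_conv (S L) L i) by lia.
      f_equal. rewrite Hi. replace (S L - L)%nat with 1%nat by lia. simpl. lia.
    + assert (Hi' : (i < 2^L)%nat) by (simpl in Hj; lia).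
      set (l := S L). set (m := (2*i+1)%nat).
      set (s := sl th l). set (ch := cosh (th * (1/2^l))).
      assert (Hs : 0 < s) by (apply sl_pos; auto). assert (Hc : 0 < ch) by apply cosh_pos.
      assert (Hin : In (l, m) (idx l)).
      { apply in_idx. right; right. exists l, i. unfold l, m. simpl. rewrite Nat.sub_0_r. repeat split; lia. }
      apply inspan_ext with (fun x => / (s*ch) * psi th (l,m) x +
           (/ (2*ch)) * (1 * Kexp th x (node L i) + 1 * Kexp th x (node L (i+1)))).
      2:{ apply inspan_lin. apply inspan_psi; auto. apply inspan_up. apply inspan_lin; apply IHL; lia. }
      intros x _. rewrite psi_lev by (unfold l; lia). rewrite psi_lm_rep. fold s. fold ch.
      assert (E1 : node L i = (INR m - 1) / 2^l).
      { unfold node at 1. rewrite <- (node_conv l L i) by (unfold l; lia). unfold node. replace (l - L)%nat with 1%nat by (unfold l; lia).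
        replace (i * 2^1)%nat with (m - 1)%nat by (unfold m; simpl; lia). rewrite minus_INR by (unfold m; lia). simpl (INR 1). reflexivity. }
      assert (E2 : node L (i+1) = (INR m + 1) / 2^l).
      { unfold node at 1. rewrite <- (node_conv l L (i+1)) by (unfold l; lia). unfold node. replace (l - L)%nat with 1%nat by (unfold l; lia).
        replace ((i+1) * 2^1)%nat with (m + 1)%nat by (unfold m; simpl; lia). rewrite plus_INR. simpl (INR 1). reflexivity. }
      assert (E3 : node l j = INR m / 2^l) by (unfold node, m; rewrite Hi; reflexivity).
      fold l. rewrite E1, E2, E3. field. lra.
Qed.

Theorem mainTheorem2 (theta : R) (L : nat) :
  0 < theta -> (1 <= L)%nat ->
  NoDup (idx L) /\ length (idx L) = (2 ^ L + 1)%nat /\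
  (* each psi lies in V, with coefficients C a, and they are orthonormal *)
  (exists C : nat * nat -> nat -> R,
     (forall a, In a (idx L) ->
        forall x, 0 <= x <= 1 -> psi theta a x = comb theta L (C a) x) /\
     (forall a b, In a (idx L) -> In b (idx L) ->
        rkhs_ip theta L (C a) (C b) = delta a b)) /\
  (* they span V *)
  (forall j, (j <= 2 ^ L)%nat ->
     exists d : nat * nat -> R,
       forall x, 0 <= x <= 1 ->
         Kexp theta x (node L j) = sum_list (idx L) (fun a => d a * psi theta a x)).
Proof.
  intros Hth HL. split; [apply NoDup_idx|]. split; [apply length_idx|]. split.
  - exists (Cf theta L). split.
    + intros. apply rep; auto.
    + intros a b Ha Hb. destruct (Nat.le_ge_cases (fst a) (fst b)).
      * apply ortho_coarse; auto.
      * rewrite rkhs_sym, delta_sym. apply ortho_coarse; auto.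
  - intros j Hj. destruct (span_all theta L Hth j Hj) as [d Hd]. exists d. exact Hd.
Qed.
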